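(* Let $n\ge 3$ and let $C_n$ be the cycle on $n$ vertices. Then $$\tau(C_n)=\begin{cases}4 & \text{if } n\equiv 0 \pmod 4,\\ n & \text{if } n\equiv 1,3 \pmod 4,\\ \left(\frac n2\right)^2 & \text{if } n\equiv 2 \pmod 4.\end{cases}$$
   Context: A set $D \subseteq V(G)$ is a total dominating set of a graph $G$ if every vertex of $G$ has a neighbor in $D$. $\gamma_t(G)$ is the minimum cardinality of a total dominating set; a minimum one is a $\gamma_t(G)$-set, and $\tau(G)$ is the number of $\gamma_t(G)$-sets. *)

(* Defs.v *)
From mathcomp Require Import all_boot.
Set Implicit Arguments. Unset Strict Implicit.

(* A simple graph on a finite vertex type T is given by a (symmetric,
   irreflexive) adjacency relation adj : rel T. *)

Definition total_dominating (T : finType) (adj : rel T) (D : {set T}) : bool :=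
  [forall v : T, [exists u in D, adj v u]].

(* gamma_t(G): the minimum cardinality of a total dominating set.
   (If G has no total dominating set, e.g. an isolated vertex, the min over
   an empty family is taken to be #|T|; irrelevant for cycles.) *)
Definition gamma_t (T : finType) (adj : rel T) : nat :=
  \big[minn/#|T|]_(D : {set T} | total_dominating adj D) #|D|.

Definition gamma_t_set (T : finType) (adj : rel T) (D : {set T}) : bool :=
  total_dominating adj D && (#|D| == gamma_t adj).

Definition tau (T : finType) (adj : rel T) : nat :=
  #|[set D : {set T} | gamma_t_set adj D]|.

Definition cycle_adj (n : nat) : rel 'I_n :=
  fun i j => (j == (i.+1 %% n) :> nat) || (i == (j.+1 %% n) :> nat).
Arguments cycle_adj n : clear implicits.

(* Main.v *)
Require Import Defs.
From mathcomp Require Import all_boot zify.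
Set Implicit Arguments. Unset Strict Implicit.
Set Warnings "-notation-overridden".

Definition per m (f : nat -> bool) := forall k, f k = f (k %% m).
Definition cov (f : nat -> bool) := forall k, f k || f k.+1.
Definition cnt m (f : nat -> bool) := \sum_(k < m) (f k : nat).

Lemma per_eq m f x y : per m f -> x %% m = y %% m -> f x = f y.
Proof. by move=> P E; rewrite P E -P. Qed.

Lemma cnt_shift1 m f : 0 < m -> per m f -> \sum_(k < m) (f k.+1 : nat) = cnt m f.
Proof.
move=> m0 P.
have E : \sum_(i<m.+1) (f i : nat) = \sum_(i<m.+1) (f i : nat) by [].
rewrite {1}big_ord_recr big_ord_recl /= in E.
have Em : f m = f 0 by rewrite P modnn.
rewrite Em addnC /cnt in E.
by move/addnI: E.
Qed.

Lemma per_shift m f s : 0 < m -> per m f -> per m (fun k => f (k + s)).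
Proof. move=> m0 P k /=; apply: per_eq P _; by rewrite modnDml. Qed.

Lemma cnt_shift m f s : 0 < m -> per m f -> \sum_(k < m) (f (k + s) : nat) = cnt m f.
Proof.
move=> m0 P; elim: s => [|s IH].
  by apply: eq_bigr => k _; rewrite addn0.
rewrite -IH; have := cnt_shift1 m0 (per_shift s m0 P); rewrite /cnt => <-.
by apply: eq_bigr => k _; rewrite addnS addSn.
Qed.

Lemma edge_sum m f : 0 < m -> per m f -> cov f ->
  \sum_(k < m) ((f k && f k.+1) : nat) + m = 2 * cnt m f.
Proof.
move=> m0 P C.
have -> : 2 * cnt m f = \sum_(k < m) ((f k : nat) + f k.+1).
  by rewrite big_split /= (cnt_shift1 m0 P) mul2n addnn.
transitivity (\sum_(k < m) (((f k && f k.+1) : nat) + 1)).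
  by rewrite big_split /= sum_nat_const card_ord muln1.
apply: eq_bigr => k _; have := C k.
by case: (f k); case: (f k.+1).
Qed.

Lemma cov_lb m f : 0 < m -> per m f -> cov f -> m <= 2 * cnt m f.
Proof. move=> m0 P C; rewrite -(edge_sum m0 P C); exact: leq_addl. Qed.

Lemma per_edge m f k : per m f -> (f k && f k.+1) = (f (k %% m) && f (k %% m).+1).
Proof.
move=> P; rewrite -P; congr (_ && _); apply: per_eq P _.
by rewrite -[(k %% m).+1]addn1 -[k.+1]addn1 modnDml.
Qed.

Lemma cov_even m f : 0 < m -> per m f -> cov f -> m <= 2 * cnt m f ?= iff true ->
  True.
Proof. by []. Qed.

Lemma cov_even' m f : 0 < m -> per m f -> cov f -> 2 * cnt m f = m ->
  forall k, f k = f 0 (+) odd k.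
Proof.
move=> m0 P C E.
have S0 : \sum_(k < m) ((f k && f k.+1) : nat) = 0.
  by apply/eqP; rewrite -(eqn_add2r m) add0n (edge_sum m0 P C) E.
have N : forall k, ~~ (f k && f k.+1).
  move=> k; rewrite (per_edge k P).
  move/eqP: S0; rewrite sum_nat_eq0 => /forallP /(_ (Ordinal (ltn_pmod k m0))).
  by rewrite /=; case: (_ && _).
elim=> [|k IH]; first by rewrite addbF.
have := C k; have := N k; rewrite IH /= ?addbN.
by case: (f 0 (+) odd k); case: (f k.+1).
Qed.

Definition F m i k := ~~ odd ((k + (m - i)) %% m).

Lemma cov_odd m f : 0 < m -> per m f -> cov f -> 2 * cnt m f = m.+1 ->
  exists2 i, i < m & forall k, f k = F m i k.
Proof.
move=> m0 P C E.
have S1 : \sum_(k < m) ((f k && f k.+1) : nat) = 1.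
  by apply/eqP; rewrite -(eqn_add2r m) (edge_sum m0 P C) E add1n.
case: (pickP (fun k : 'I_m => f k && f k.+1)) => [j Hj | H]; last first.
  by move: S1; rewrite big1 // => k _; rewrite H.
move: S1; rewrite (bigD1 j) //= Hj add1n => /eqP; rewrite eqSS sum_nat_eq0.
move=> /forallP Hr.
have Nk : forall k, k %% m != j -> ~~ (f k && f k.+1).
  move=> k Hk; rewrite (per_edge k P).
  have := Hr (Ordinal (ltn_pmod k m0)); rewrite /= -(inj_eq val_inj) /= Hk /=.
  by case: (_ && _).
have Ind : forall t, t < m -> f (j.+1 + t) = ~~ odd t.
  elim=> [|t IH] Ht; first by rewrite addn0; case/andP: Hj.
  have Hk : (j.+1 + t) %% m != j.
    apply/eqP => Q; have := divn_eq (j.+1 + t) m; rewrite Q.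
    have := ltn_ord j; move: Ht; move: (_ %/ m) => q.
    case: q => [|q]; rewrite ?mul0n ?mulSn; lia.
  have := C (j.+1 + t); have := Nk _ Hk; rewrite IH ?(ltnW Ht) // addnS /=.
  by case: (odd t); case: (f _).
exists (j.+1 %% m); first exact: ltn_pmod.
move=> k; rewrite /F -Ind; last exact: ltn_pmod.
apply: per_eq P _.
set i := j.+1 %% m.
have Hi : i <= m by exact: ltnW (ltn_pmod _ m0).
rewrite modnDmr -modnDml -/i addnA (addnC i) -addnA subnKC //.
by rewrite modnDr.
Qed.

Lemma F_per m i : 0 < m -> per m (F m i).
Proof. by move=> m0 k; rewrite /F modnDml. Qed.

Lemma F_cov m i : odd m -> cov (F m i).
Proof.
move=> om k; rewrite /F addSn.
have m0 : 0 < m by case: m om.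
have E : (k + (m-i)).+1 %% m = ((k + (m - i)) %% m).+1 %% m.
  by rewrite -addn1 -[(_ %% m).+1]addn1 modnDml.
rewrite E; set t := (k + (m - i)) %% m.
have tm : t < m by exact: ltn_pmod.
case: (ltngtP t.+1 m) => H.
- by rewrite (modn_small H) /=; case: (odd t).
- by move: H; rewrite ltnNge tm.
- have -> : t = m.-1 by rewrite -H.
  by move: om; clear E; case: m {tm H t} m0 => // m' _ /=; case: (odd m').
Qed.

Lemma sum_even p : \sum_(k < p.*2.+1) (~~ odd k : nat) = p.+1.
Proof.
elim: p => [|p IH]; first by rewrite big_ord_recr big_ord0.
move: IH; rewrite big_ord_recr /= => IH.
rewrite doubleS !big_ord_recr /= IH.
by rewrite odd_double /= addn0 addn1.
Qed.

Lemma F_cnt p i : i < p.*2.+1 -> 2 * cnt p.*2.+1 (F p.*2.+1 i) = (p.*2.+1).+1.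
Proof.
move=> Hi; set m := p.*2.+1.
rewrite -(cnt_shift i _ (F_per i _)) //.
transitivity (2 * \sum_(k < m) (~~ odd k : nat)); last by rewrite sum_even mul2n doubleS.
congr (2 * _); apply: eq_bigr => k _; rewrite /F -addnA subnKC ?(ltnW Hi) //.
by rewrite modnDr modn_small.
Qed.

Lemma F_both m i : odd m -> i < m -> F m i (i + m.-1) && F m i (i + m.-1).+1.
Proof.
move=> om Hi; have m0 : 0 < m by case: m om Hi.
rewrite /F -addnS prednK // -!addnA (addnC m) !addnA subnKC ?(ltnW Hi) //.
rewrite modnDl modnn /= andbT addnAC subnKC ?(ltnW Hi) // modnDl modn_small.
  by move: om; case: m {Hi} m0.
by rewrite prednK // -{2}(prednK m0).
Qed.

Lemma F_both_pos m i k : 0 < m -> F m i k && F m i k.+1 -> (k + (m - i)) %% m = m.-1.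
Proof.
move=> m0; rewrite /F addSn.
have E : (k + (m-i)).+1 %% m = ((k + (m - i)) %% m).+1 %% m.
  by rewrite -addn1 -[(_ %% m).+1]addn1 modnDml.
rewrite E; set t := (k + (m - i)) %% m.
have tm : t < m by exact: ltn_pmod.
case: (ltngtP t.+1 m) => H.
- by rewrite (modn_small H) /=; case: (odd t).
- by move: H; rewrite ltnNge tm.
- by rewrite -H.
Qed.

Lemma F_inj m i i' : odd m -> i < m -> i' < m -> (forall k, F m i k = F m i' k) -> i = i'.
Proof.
move=> om Hi Hi' E; have m0 : 0 < m by case: m om Hi Hi' E.
have := F_both om Hi; rewrite !E => /(F_both_pos m0).
move=> Q; have := divn_eq (i + m.-1 + (m - i')) m; rewrite Q.
move: (_ %/ m) => q; move: Hi Hi' m0.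
case: q => [|[|q]]; rewrite ?mul0n ?mulSn; lia.
Qed.

Definition A (a : bool) k := a (+) odd k.

Lemma A_per m a : ~~ odd m -> per m (A a).
Proof. by move=> om k; rewrite /A odd_mod //; apply/negbTE. Qed.

Lemma A_cov a : cov (A a).
Proof. by move=> k; rewrite /A /=; case: a; case: (odd k). Qed.

Lemma A_cnt p a : 2 * cnt p.*2 (A a) = p.*2.
Proof.
rewrite /cnt mul2n; congr (_.*2).
elim: p => [|p IH]; first by rewrite big_ord0.
rewrite doubleS !big_ord_recr /= IH /A /= odd_double.
by case: a {IH}; rewrite /= ?addn0 ?add0n ?addn1.
Qed.

Definition dm n (D : {set 'I_n}) v := [exists u : 'I_n, (u \in D) && ((u : nat) == v %% n)].

Lemma dm_ord n (D : {set 'I_n}) (u : 'I_n) : dm D u = (u \in D).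
Proof.
rewrite /dm; apply/existsP/idP => [[u' /andP [H /eqP E]]|H].
  by rewrite (modn_small (ltn_ord _)) // in E; move/val_inj: E => <-.
exists u; rewrite H /= (modn_small (ltn_ord _)); exact: eqxx.
Qed.

Lemma dm_per n (D : {set 'I_n}) : per n (dm D).
Proof. by move=> k; rewrite /dm modn_mod. Qed.

Lemma dm_set n (P : nat -> bool) w (n0 : 0 < n) :
  dm [set v : 'I_n | P v] w = P (w %% n).
Proof.
rewrite /dm; apply/existsP/idP => [[u /andP [H /eqP E]]|H].
  by rewrite inE E in H.
by exists (Ordinal (ltn_pmod w n0)); rewrite inE /= H eqxx.
Qed.

Lemma card_dm n (D : {set 'I_n}) : #|D| = \sum_(v < n) (dm D v : nat).
Proof.
rewrite -sum1_card big_mkcond /=; apply: eq_bigr => v _.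
by rewrite dm_ord; case: (v \in D).
Qed.

Lemma set_dm n (D D' : {set 'I_n}) : (forall v, dm D v = dm D' v) -> D = D'.
Proof. by move=> H; apply/setP => u; rewrite -!dm_ord H. Qed.

Lemma tds_iff n (D : {set 'I_n}) : 0 < n ->
  total_dominating (cycle_adj n) D <-> (forall v, dm D v || dm D v.+2).
Proof.
move=> n0; split.
- move=> /forallP H v.
  have := H (Ordinal (ltn_pmod v.+1 n0)) => /existsP [u /andP [uD]].
  rewrite /cycle_adj /= => /orP [] /eqP E.
    apply/orP; right; apply/existsP; exists u; rewrite uD E /=.
    by rewrite -[_.+1]addn1 -[v.+2]addn1 modnDml.
  apply/orP; left; apply/existsP; exists u; rewrite uD /=.
  move/eqP: E; rewrite -addn1 -[u.+1]addn1 eqn_modDr => /eqP ->.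
  by rewrite (modn_small (ltn_ord _)).
- move=> H; apply/forallP => x.
  have := H (x + n.-1); rewrite /cycle_adj => /orP [] /existsP [u /andP [uD /eqP E]];
    apply/existsP; exists u; rewrite uD /=; apply/orP.
    right; rewrite E -[(_ %% n).+1]addn1 modnDml.
    have -> : x + n.-1 + 1 = x + n by lia.
    by rewrite modnDr modn_small.
  left; rewrite E.
  have -> : (x + n.-1).+2 = x.+1 + n by lia.
  by rewrite modnDr.
Qed.

Lemma bigmin_le (T : finType) (P : pred T) (F : T -> nat) x j :
  P j -> \big[minn/x]_(i | P i) F i <= F j.
Proof.
move=> Pj; have : j \in index_enum T by rewrite mem_index_enum.
elim: (index_enum T) => [//|a r IH]; rewrite inE big_cons.
case/orP => [/eqP <-|Hr]; first by rewrite Pj geq_minl.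
case: (P a); last exact: IH.
by rewrite geq_min IH ?orbT.
Qed.

Lemma tau_count n (I : finType) (G : I -> {set 'I_n}) g (i0 : I) :
  g <= n -> injective G ->
  (forall i, total_dominating (cycle_adj n) (G i)) -> (forall i, #|G i| = g) ->
  (forall D, total_dominating (cycle_adj n) D -> g <= #|D|) ->
  (forall D, total_dominating (cycle_adj n) D -> #|D| = g -> exists i, D = G i) ->
  tau (cycle_adj n) = #|I|.
Proof.
move=> gn Gi Gt Gc lb ch.
have Hg : gamma_t (cycle_adj n) = g.
  apply/eqP; rewrite eqn_leq; apply/andP; split.
    by rewrite /gamma_t -(Gc i0); apply: bigmin_le.
  rewrite /gamma_t; apply: (big_ind (fun y => g <= y)).
  - by rewrite card_ord.
  - by move=> x y Hx Hy; rewrite leq_min Hx Hy.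
  - exact: lb.
rewrite /tau -(card_imset predT Gi); apply: eq_card => D.
rewrite !inE /gamma_t_set Hg; apply/idP/imsetP.
  by case/andP => HD /eqP HC; have [i ->] := ch D HD HC; exists i.
by case=> i _ ->; rewrite Gt Gc eqxx.
Qed.

Lemma dbl_q n q f k : per n f -> 2 * q = n.+1 -> f (2 * k * q) = f k.
Proof.
move=> P hq; apply: per_eq P _.
by rewrite -mulnA (mulnC k) mulnA hq mulSn addnC (mulnC n) modnMDl.
Qed.

Lemma dbl_inj n q (n0 : 0 < n) : 2 * q = n.+1 ->
  injective (fun k : 'I_n => Ordinal (ltn_pmod (2 * k) n0)).
Proof.
move=> hq k k' /(congr1 val) /= E; apply: val_inj => /=.
have key : forall x, x %% n = ((2 * x) %% n * q) %% n.
  by move=> x; rewrite modnMml -mulnA (mulnC x) mulnA hq mulSn addnC (mulnC n) modnMDl.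
rewrite -[nat_of_ord k](modn_small (ltn_ord k)) -[nat_of_ord k'](modn_small (ltn_ord k')).
by rewrite (key k) (key k') E.
Qed.

Lemma sum_dbl n q g : 0 < n -> 2 * q = n.+1 -> per n g ->
  \sum_(v < n) (g v : nat) = \sum_(k < n) (g (2 * k) : nat).
Proof.
move=> n0 hq P; rewrite (reindex_inj (@dbl_inj n q n0 hq)) /=.
by apply: eq_bigr => k _; rewrite [in RHS]P.
Qed.

Lemma odd_case p : 0 < p -> tau (cycle_adj p.*2.+1) = p.*2.+1.
Proof.
move=> p0; set n := p.*2.+1; set q := p.+1.
have n0 : 0 < n by [].
have hq : 2 * q = n.+1 by rewrite mul2n doubleS.
have on : odd n by rewrite /= odd_double.
pose G (i : 'I_n) := [set v : 'I_n | F n i (v * q)].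
have dmG : forall i w, dm (G i) w = F n i (w * q).
  move=> i w; rewrite /G (dm_set (fun x => F n i (x * q))) //; apply: per_eq (F_per i n0) _.
  by rewrite modnMml.
have dmG2 : forall i k, dm (G i) (2 * k) = F n i k.
  by move=> i k; rewrite dmG (dbl_q _ (F_per i n0) hq).
have fper : forall D : {set 'I_n}, per n (fun k => dm D (2 * k)).
  move=> D k /=; apply: per_eq (@dm_per n D) _; by rewrite modnMmr.
have fcnt : forall D : {set 'I_n}, cnt n (fun k => dm D (2 * k)) = #|D|.
  by move=> D; rewrite card_dm (sum_dbl n0 hq (@dm_per n D)).
have fcov : forall D : {set 'I_n}, total_dominating (cycle_adj n) D ->
    cov (fun k => dm D (2 * k)).
  move=> D /(tds_iff _ n0) H k /=; by rewrite mulnS add2n.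
transitivity #|'I_n|; last exact: card_ord.
apply: (tau_count (G := G) (g := p.+1) ord0).
- by rewrite /n; lia.
- move=> i i' E; apply: val_inj; apply: (F_inj on (ltn_ord i) (ltn_ord i')) => k.
  by rewrite -!dmG2 E.
- move=> i; apply/(tds_iff _ n0) => v; rewrite !dmG.
  have -> : F n i (v.+2 * q) = F n i (v * q).+1.
    apply: per_eq (F_per i n0) _.
    by rewrite -addn2 mulnDl hq addnS -addSn modnDr.
  exact: F_cov.
- move=> i; rewrite -(fcnt (G i)).
  have : cnt n (fun k => dm (G i) (2 * k)) = cnt n (F n i).
    by apply: eq_bigr => k _; rewrite dmG2.
  move=> ->; have := @F_cnt p i (ltn_ord i); rewrite -/n; lia.
- move=> D HD; have := cov_lb n0 (fper D) (fcov D HD); by rewrite fcnt mul2n -ltn_double.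
- move=> D HD HC.
  have [i Hi fE] := cov_odd n0 (fper D) (fcov D HD) (etrans (congr1 _ (fcnt D)) (etrans (congr1 _ HC) hq)).
  exists (Ordinal Hi); apply: set_dm => v; rewrite dmG /= -fE mulnA.
  by rewrite (dbl_q _ (@dm_per n D) hq).
Qed.

Lemma sum_half m (g : nat -> bool) : \sum_(v < m.*2) (g v : nat) =
  \sum_(k < m) (g (2 * k) : nat) + \sum_(k < m) (g (2 * k).+1 : nat).
Proof.
elim: m => [|m IH]; first by rewrite !big_ord0.
rewrite doubleS !big_ord_recr /= IH -mul2n.
rewrite -!addnA; congr (_ + _); rewrite addnCA; congr (_ + _); by rewrite addnC.
Qed.

Definition E2 m (e o : nat -> bool) :=
  [set v : 'I_m.*2 | if odd v then o v./2 else e v./2].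

Lemma dmE2 m e o w : 0 < m -> per m e -> per m o ->
  dm (E2 m e o) w = if odd w then o w./2 else e w./2.
Proof.
move=> m0 Pe Po; rewrite /E2 (dm_set (fun x => if odd x then o x./2 else e x./2)) ?double_gt0 //.
rewrite odd_mod ?odd_double //.
have -> : (w %% m.*2)./2 = (w./2) %% m by rewrite -divn2 -muln2 -modn_divl divn2.
by case: (odd w); [rewrite -Po | rewrite -Pe].
Qed.

Lemma even_gen m (I : finType) (Phi : I -> nat -> bool) c (i0 : I) :
  0 < m -> (forall i, per m (Phi i)) -> (forall i, cov (Phi i)) ->
  (forall i, cnt m (Phi i) = c) ->
  (forall i j, (forall k, Phi i k = Phi j k) -> i = j) ->
  (forall f, per m f -> cov f -> c <= cnt m f) ->
  (forall f, per m f -> cov f -> cnt m f = c -> exists i, forall k, f k = Phi i k) ->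
  c <= m ->
  tau (cycle_adj m.*2) = #|I| * #|I|.
Proof.
move=> m0 Pp Pc Pn Pi Plb Pch cm.
have n0 : 0 < m.*2 by rewrite double_gt0.
rewrite -card_prod.
pose G (x : I * I) := E2 m (Phi x.1) (Phi x.2).
have dmG : forall x w, dm (G x) w = if odd w then Phi x.2 w./2 else Phi x.1 w./2.
  by move=> x w; apply: dmE2.
have dmG0 : forall x k, dm (G x) (2 * k) = Phi x.1 k.
  by move=> x k; rewrite dmG mul2n odd_double doubleK.
have dmG1 : forall x k, dm (G x) (2 * k).+1 = Phi x.2 k.
  by move=> x k; rewrite dmG mul2n /= odd_double /= uphalf_double.
have eper : forall D : {set 'I_m.*2}, per m (fun k => dm D (2 * k)).
  move=> D k /=; apply: per_eq (@dm_per _ D) _.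
  by rewrite muln_modr -mul2n modn_mod.
have oper : forall D : {set 'I_m.*2}, per m (fun k => dm D (2 * k).+1).
  move=> D k /=; apply: per_eq (@dm_per _ D) _.
  by rewrite muln_modr -mul2n -[((2 * k) %% _).+1]addn1 modnDml addn1.
have ecov : forall D : {set 'I_m.*2}, total_dominating (cycle_adj m.*2) D ->
    cov (fun k => dm D (2 * k)).
  move=> D /(tds_iff _ n0) H k /=; by rewrite mulnS add2n.
have ocov : forall D : {set 'I_m.*2}, total_dominating (cycle_adj m.*2) D ->
    cov (fun k => dm D (2 * k).+1).
  move=> D /(tds_iff _ n0) H k /=; by rewrite mulnS add2n.
have Dcnt : forall D : {set 'I_m.*2},
    #|D| = cnt m (fun k => dm D (2 * k)) + cnt m (fun k => dm D (2 * k).+1).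
  by move=> D; rewrite card_dm sum_half.
apply: (tau_count (G := G) (g := c.*2) (i0, i0)).
- by rewrite leq_double.
- move=> [a b] [a' b'] E.
  have -> : a = a' by apply: Pi => k; rewrite -(dmG0 (a, b)) -(dmG0 (a', b')) E.
  have -> : b = b' by apply: Pi => k; rewrite -(dmG1 (a, b)) -(dmG1 (a', b')) E.
  by [].
- move=> x; apply/(tds_iff _ n0) => v; rewrite !dmG /=.
  by case: (odd v); [exact: Pc | exact: Pc].
- move=> x; rewrite Dcnt -(addnn c); congr (_ + _); [rewrite -(Pn x.1) | rewrite -(Pn x.2)];
    by apply: eq_bigr => k _; rewrite ?dmG0 ?dmG1.
- move=> D HD; rewrite Dcnt -(addnn c) leq_add //; apply: Plb; auto.
- move=> D HD HC.
  have l1 := Plb _ (eper D) (ecov D HD).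
  have l2 := Plb _ (oper D) (ocov D HD).
  move: HC; rewrite Dcnt -(addnn c) => HC.
  have [i Hi] := Pch _ (eper D) (ecov D HD) ltac:(lia).
  have [j Hj] := Pch _ (oper D) (ocov D HD) ltac:(lia).
  exists (i, j); apply: set_dm => v; rewrite dmG /= -Hi -Hj.
  by rewrite -{1}(odd_double_half v) mul2n; case: (odd v); rewrite ?add1n ?add0n.
Qed.

Lemma even0 p : 0 < p -> tau (cycle_adj (p.*2).*2) = 4.
Proof.
move=> p0.
have -> : 4 = #|{: bool}| * #|{: bool}| by rewrite card_bool.
have ev : ~~ odd p.*2 by rewrite odd_double.
have m0 : 0 < p.*2 by rewrite double_gt0.
apply: (even_gen (Phi := A) (c := p) true m0).
- by move=> a; exact: A_per.
- exact: A_cov.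
- by move=> a; have := A_cnt p a; rewrite mul2n => /double_inj.
- by move=> a b /(_ 0); rewrite /A /= !addbF.
- move=> f P C; have := cov_lb m0 P C; by rewrite mul2n leq_double.
- move=> f P C E; exists (f 0) => k; apply: (cov_even' m0 P C).
  by rewrite E mul2n.
- by rewrite -addnn leq_addr.
Qed.

Lemma even1 p : tau (cycle_adj (p.*2.+1).*2) = (p.*2.+1) ^ 2.
Proof.
set m := p.*2.+1.
have om : odd m by rewrite /= odd_double.
have m0 : 0 < m by [].
rewrite -mulnn; transitivity (#|'I_m| * #|'I_m|); last by rewrite card_ord.
apply: (even_gen (Phi := fun i : 'I_m => F m i) (c := p.+1) ord0 m0).
- by move=> i; exact: F_per.
- by move=> i; exact: F_cov.
- move=> i; have := @F_cnt p i (ltn_ord i); rewrite -/m mul2n => H.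
  by apply: double_inj; rewrite H /m doubleS.
- move=> i j H; apply: val_inj; exact: F_inj om (ltn_ord i) (ltn_ord j) H.
- move=> f P C; have := cov_lb m0 P C; rewrite /m mul2n => H.
  by rewrite -ltn_double.
- move=> f P C E.
  have E2' : 2 * cnt m f = m.+1 by rewrite E mul2n doubleS.
  have [i Hi fE] := cov_odd m0 P C E2'.
  by exists (Ordinal Hi).
- by rewrite /m ltnS -addnn leq_addr.
Qed.

Theorem theorem4p1 (n : nat) (hn : 3 <= n) :
  tau (cycle_adj n) =
    if n %% 4 == 0 then 4
    else if n %% 4 == 2 then (n %/ 2) ^ 2
    else n.
Proof.
have E := odd_double_half n.
case On : (odd n) in E.
- set p := n./2 in E; rewrite -E add1n.
  have p0 : 0 < p by move: hn; rewrite -E; case: (p).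
  rewrite odd_case //.
  have o4 := @odd_mod (p.*2.+1) 4 erefl.
  rewrite /= odd_double /= in o4.
  case: eqP => [h|_]; first by rewrite h in o4.
  case: eqP => [h|_] //; by rewrite h in o4.
- set m := n./2 in E; rewrite add0n in E; rewrite -E.
  have E' := odd_double_half m.
  case Om : (odd m) in E'.
  + set p := m./2 in E'; rewrite -E' add1n even1.
    have -> : (p.*2.+1).*2 %% 4 = 2 by rewrite -!mul2n; lia.
    by rewrite divn2 doubleK.
  + set p := m./2 in E'; rewrite -E' add0n even0.
    * by have -> : (p.*2).*2 %% 4 = 0 by rewrite -!mul2n; lia.
    * by move: hn; rewrite -E -E' add0n; case: (p).
Qed.
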